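(* Let $r$ be a positive integer and $s$ a non-negative integer, with $r\notin\{2,6\}$. Then a solution to $(4,3)$-HWP$(24;r,s)$ exists if and only if $r+s=11$.
   Context: $K_{24}-I$ denotes the complete graph on $24$ vertices with the edges of a perfect matching $I$ removed. A $C_k$-factor of a graph is a spanning subgraph each of whose components is a cycle of length $k$. A solution to $(4,3)$-HWP$(24;r,s)$ is a partition of the edge set of $K_{24}-I$, for some perfect matching $I$, into $r$ $C_4$-factors and $s$ $C_3$-factors. *)

(* Defs.v *)
From mathcomp Require Import all_boot.
Set Implicit Arguments. Unset Strict Implicit. Unset Printing Implicit Defensive.

(* Vertices of K_24. An (undirected) edge is a 2-element vertex set;
   a graph (spanning subgraph) is given by its edge set. *)
Definition vert := 'I_24.
Definition graph := {set {set vert}}.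

Definition cycle_edges (c : seq vert) : graph :=
  [set [set nth ord0 c i; nth ord0 c (i.+1 %% size c)] | i : 'I_(size c)].

Definition Ck_factor (k : nat) (H : graph) : Prop :=
  exists cs : seq (seq vert),
    [/\ all (fun c => (size c == k) && uniq c) cs,
        uniq (flatten cs),
        (forall v : vert, v \in flatten cs) &
        H = \bigcup_(c <- cs) cycle_edges c].

Definition perfect_matching (I : graph) : Prop :=
  (forall e, e \in I -> #|e| = 2) /\
  (forall v : vert, #|[set e in I | v \in e]| = 1).

Definition K24_minus (I : graph) : graph :=
  [set e : {set vert} | (#|e| == 2) && (e \notin I)].

Definition HWP43_24 (r s : nat) : Prop :=
  exists I : graph, perfect_matching I /\
  exists P : 'I_(r + s) -> graph,
    [/\ forall i : 'I_(r + s), i < r -> Ck_factor 4 (P i),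
        forall i : 'I_(r + s), r <= i -> Ck_factor 3 (P i),
        forall i j : 'I_(r + s), i != j -> [disjoint P i & P j] &
        \bigcup_(i < r + s) P i = K24_minus I].

(* Main.v *)
Require Import Defs.
From mathcomp Require Import all_boot.
From mathcomp Require Import zify.
Set Implicit Arguments. Unset Strict Implicit. Unset Printing Implicit Defensive.

Definition ordn (k : nat) : vert := @Ordinal 24 (k %% 24) (ltn_pmod k (isT : 0 < 24)).
Definition allv : seq vert := map ordn (iota 0 24).
Lemma mem_allv (x : vert) : x \in allv.
Proof.
apply/mapP; exists (val x); first by rewrite mem_iota ltn_ord.
by apply: val_inj; rewrite /= modn_small.
Qed.
Definition mate (x : vert) : vert := ordn (x + 12).
Definition Imatch : graph := [set [set x; mate x] | x : vert].

Definition adjb (c : seq vert) (x y : vert) : bool :=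
  has (fun i => (nth ord0 c i == x) && (nth ord0 c (i.+1 %% size c) == y))
      (iota 0 (size c)).
Definition adjs c x y := adjb c x y || adjb c y x.
Definition idxs (F : seq (seq (seq vert))) (x y : vert) : seq nat :=
  [seq i <- iota 0 (size F) | has (fun c => adjs c x y) (nth [::] F i)].
Definition goodf k (cs : seq (seq vert)) : bool :=
  [&& all (fun c => (size c == k) && uniq c) cs, uniq (flatten cs) &
      all (fun v => v \in flatten cs) allv].
Definition check (r : nat) (F : seq (seq (seq vert))) : bool :=
  [&& all (goodf 4) (take r F), all (goodf 3) (drop r F),
      all (fun x => all (fun y =>
          size (idxs F x y) == (x != y) && (y != mate x)) allv) allv &
      all (fun x => (mate x != x) && (mate (mate x) == x)) allv].

Lemma cycle_edgesP c e :
  reflect (exists x y, e = [set x; y] /\ adjb c x y) (e \in cycle_edges c).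
Proof.
apply: (iffP imsetP).
  case=> i _ ->; exists (nth ord0 c i), (nth ord0 c (i.+1 %% size c)); split=> //.
  by apply/hasP; exists (val i); rewrite ?mem_iota ?add0n ?ltn_ord ?eqxx.
case=> x [y [-> /hasP [i]]]; rewrite mem_iota add0n /= => Hi /andP [/eqP <- /eqP <-].
by exists (Ordinal Hi).
Qed.

Lemma set2_eq (x y x' y' : vert) : [set x; y] = [set x'; y'] ->
  (x = x' /\ y = y') \/ (x = y' /\ y = x').
Proof.
move=> E.
have /set2P h1 : x \in [set x'; y'] by rewrite -E set21.
have /set2P h2 : y \in [set x'; y'] by rewrite -E set22.
have /set2P h3 : x' \in [set x; y] by rewrite E set21.
have /set2P h4 : y' \in [set x; y] by rewrite E set22.
case: h1; case: h2; case: h3; case: h4; move=> *;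
  first [left; split; congruence | right; split; congruence].
Qed.

Lemma in_bigcup_seq (cs : seq (seq vert)) e :
  e \in \bigcup_(c <- cs) cycle_edges c ->
  exists2 c, c \in cs & e \in cycle_edges c.
Proof.
elim: cs => [|c cs IH]; first by rewrite big_nil inE.
rewrite big_cons inE => /orP [h|/IH [c' h1 h2]].
  by exists c; rewrite ?inE ?eqxx.
by exists c'; rewrite // inE h1 orbT.
Qed.

Lemma bigcup_seq_in (cs : seq (seq vert)) c e :
  c \in cs -> e \in cycle_edges c -> e \in \bigcup_(c <- cs) cycle_edges c.
Proof.
elim: cs => [|c0 cs IH] //; rewrite inE big_cons inE => /orP [/eqP <- -> //|h he].
by rewrite IH ?orbT.
Qed.

Lemma goodP k cs : goodf k cs -> Ck_factor k (\bigcup_(c <- cs) cycle_edges c).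
Proof.
case/and3P=> h1 h2 /allP h3; exists cs; split=> // v; apply: h3; exact: mem_allv.
Qed.

Lemma in_idxs F x y i :
  (i \in idxs F x y) = (i < size F) && has (fun c => adjs c x y) (nth [::] F i).
Proof. by rewrite mem_filter mem_iota add0n andbC. Qed.

Lemma uniq_idxs F x y : uniq (idxs F x y).
Proof. by rewrite filter_uniq // iota_uniq. Qed.

Lemma construct r s (F : seq (seq (seq vert))) :
  size F = r + s -> check r F -> HWP43_24 r s.
Proof.
move=> sz /and4P [h4 h3 /allP hE /allP hM].
have mate_ne x : mate x != x by case/andP: (hM x (mem_allv x)).
have mateK x : mate (mate x) = x by case/andP: (hM x (mem_allv x)) => _ /eqP.
have hE' x y : size (idxs F x y) = (x != y) && (y != mate x).
  by move/allP: (hE x (mem_allv x)) => /(_ y (mem_allv y)) /eqP.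
have edgeP (i : nat) e : i < size F ->
    e \in \bigcup_(c <- nth [::] F i) cycle_edges c ->
    exists x y, [/\ e = [set x; y], i \in idxs F x y, x != y & y != mate x].
  move=> Hi /in_bigcup_seq [c hc /cycle_edgesP [x [y [-> hxy]]]].
  have hi : i \in idxs F x y.
    by rewrite in_idxs Hi /=; apply/hasP; exists c => //; rewrite /adjs hxy.
  have : 0 < size (idxs F x y) by case: (idxs F x y) hi.
  by rewrite hE' lt0b => /andP [a b]; exists x, y.
exists Imatch; split.
  split.
    by move=> e /imsetP [x _ ->]; rewrite cards2 eq_sym mate_ne.
  move=> v.
  have -> : [set e in Imatch | v \in e] = [set [set v; mate v]].
    apply/setP=> e; rewrite !inE; apply/andP/eqP.
      case=> /imsetP [x _ ->] /set2P [->|->] //.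
      by rewrite mateK setUC.
    move=> ->; split; last exact: set21.
    by apply/imsetP; exists v.
  by rewrite cards1.
exists (fun i : 'I_(r + s) => \bigcup_(c <- nth [::] F i) cycle_edges c).
split.
- move=> i Hi; apply: goodP; move/allP: h4; apply.
  rewrite -(nth_take [::] Hi); apply: mem_nth.
  by rewrite size_takel // sz leq_addr.
- move=> i Hi; apply: goodP; move/allP: h3; apply.
  rewrite -(subnKC Hi) -nth_drop; apply: mem_nth.
  by rewrite size_drop sz; have := ltn_ord i; lia.
- move=> i j ij; rewrite -setI_eq0; apply/eqP/setP=> e; rewrite inE in_set0.
  apply/negP=> /andP [ei ej].
  have Hi : i < size F by rewrite sz.
  have Hj : j < size F by rewrite sz.
  have [x [y [ex hi _ _]]] := edgeP _ _ Hi ei.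
  have [x' [y' [ex' hj _ _]]] := edgeP _ _ Hj ej.
  have hj' : (j : nat) \in idxs F x y.
    move: hj; rewrite !in_idxs => /andP [-> /hasP [c hc hc']]; apply/hasP; exists c => //.
    move: hc'; rewrite /adjs; case: (set2_eq (etrans (esym ex) ex')) => [[-> ->]|[-> ->]] //.
    by rewrite orbC.
  have H := @uniq_leq_size _ [:: (i : nat); (j : nat)] (idxs F x y).
  have : 2 <= size (idxs F x y).
    apply: H; first by rewrite /= inE andbT; exact: ij.
    by move=> z; rewrite !inE => /orP [/eqP ->|/eqP ->].
  by rewrite hE'; case: (_ && _).
- apply/setP=> e; rewrite /K24_minus inE; apply/bigcupP/andP.
    case=> i _ ei.
    have Hi : i < size F by rewrite sz.
    have [x [y [-> _ xy ym]]] := edgeP _ _ Hi ei.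
    rewrite cards2 xy; split => //; apply/imsetP => [[z _ ez]].
    by case: (set2_eq ez) => [[ex ey]|[ex ey]]; move: ym; rewrite ex ey ?mateK eqxx.
  case=> /cards2P [x [y [xy ->]]] nI.
  have ym : y != mate x.
    by apply: contraNneq nI => ->; apply/imsetP; exists x.
  have := hE' x y; rewrite xy ym.
  case E : (idxs F x y) => [|i [|]] // _.
  have : i \in idxs F x y by rewrite E inE.
  rewrite in_idxs => /andP []; rewrite sz => Hi /hasP [c hc].
  rewrite /adjs => /orP [h|h].
    exists (Ordinal Hi) => //; apply: bigcup_seq_in hc _.
    by apply/cycle_edgesP; exists x, y.
  exists (Ordinal Hi) => //; apply: bigcup_seq_in hc _.
  by apply/cycle_edgesP; exists y, x; rewrite setUC.
Qed.

Lemma adjb_mem c x y : adjb c x y -> (x \in c) && (y \in c).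
Proof.
case/hasP=> i; rewrite mem_iota add0n /= => Hi /andP [/eqP <- /eqP <-].
by rewrite !mem_nth // ltn_pmod //; case: (size c) Hi.
Qed.

Lemma card_cycle c : uniq c -> 2 < size c -> #|cycle_edges c| = size c.
Proof.
move=> uc hk; rewrite /cycle_edges card_imset ?card_ord //.
have hlt (i : 'I_(size c)) : i.+1 %% size c < size c by rewrite ltn_pmod //; lia.
move=> i j /set2_eq [[a b]|[a b]].
  by apply: ord_inj; apply/eqP; rewrite -(nth_uniq ord0 (ltn_ord i) (ltn_ord j) uc) a.
exfalso.
move/eqP: a; rewrite (nth_uniq ord0 (ltn_ord i) (hlt j) uc) => /eqP a.
move/eqP: b; rewrite (nth_uniq ord0 (hlt i) (ltn_ord j) uc) => /eqP b.
have := ltn_ord i; have := ltn_ord j; move: a b hk.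
move: (nat_of_ord i) (nat_of_ord j) => i' j'; clear i j hlt.
move: (size c) => k a b hk hj hi; rename i' into i; rename j' into j.
have ei : i.+1 %% k = if i.+1 == k then 0 else i.+1.
  case: eqP => [->|ne]; first by rewrite modnn.
  by rewrite modn_small //; lia.
have ej : j.+1 %% k = if j.+1 == k then 0 else j.+1.
  case: eqP => [->|ne]; first by rewrite modnn.
  by rewrite modn_small //; lia.
rewrite ei in b; rewrite ej in a; move: a b.
by case: eqP; case: eqP; lia.
Qed.

Lemma size_flatten_k k (cs : seq (seq vert)) :
  all (fun c => (size c == k) && uniq c) cs -> size (flatten cs) = k * size cs.
Proof.
elim: cs => [|c cs IH] /=; first by rewrite muln0.
by case/andP=> /andP [/eqP sc _] h; rewrite size_cat sc IH // mulnS.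
Qed.

Lemma card_factor k (cs : seq (seq vert)) : 2 < k ->
  all (fun c => (size c == k) && uniq c) cs -> uniq (flatten cs) ->
  #|\bigcup_(c <- cs) cycle_edges c| = k * size cs.
Proof.
move=> hk; elim: cs => [|c cs IH] /=; first by rewrite big_nil cards0 muln0.
case/andP=> /andP [/eqP sc uc] hall; rewrite cat_uniq => /and3P [_ hdis hu].
rewrite big_cons cardsU card_cycle ?sc // IH //.
suff -> : cycle_edges c :&: \bigcup_(c <- cs) cycle_edges c = set0.
  by rewrite cards0 subn0 mulnS.
apply/setP=> e; rewrite inE in_set0; apply/negP=> /andP [].
move=> /cycle_edgesP [x [y [-> /adjb_mem /andP [xc _]]]].
move=> /in_bigcup_seq [c' hc' /cycle_edgesP [x' [y' [E /adjb_mem /andP [xc' yc']]]]].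
have hx : x \in [set x'; y'] by rewrite -E set21.
move/negP: hdis; apply; apply/hasP.
case/set2P: hx xc => -> xc; [exists x' | exists y'] => //;
  by apply/flattenP; exists c'.
Qed.

Lemma factor_card k H : 2 < k -> Ck_factor k H -> #|H| = 24.
Proof.
move=> hk [cs [h1 h2 h3 ->]]; rewrite (card_factor hk h1 h2) -(size_flatten_k h1).
have A : size (flatten cs) <= size (enum 'I_24).
  by apply: uniq_leq_size => // v _; rewrite mem_enum.
have B : size (enum 'I_24) <= size (flatten cs).
  by apply: uniq_leq_size (enum_uniq _) _ => v _; exact: h3.
by move: A B; rewrite size_enum_ord => A B; apply/eqP; rewrite eqn_leq A B.
Qed.

Lemma necessity r s : HWP43_24 r s -> r + s = 11.
Proof.
case=> I [[hI2 hIv] [P [h4 h3 hdis hU]]].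
have cardU : #|\bigcup_(i < r + s) P i| = 24 * (r + s).
  rewrite -sum1_card (partition_disjoint_bigcup addn (fun _ => 1) hdis).
  rewrite (eq_bigr (fun _ => 24)).
    by rewrite sum_nat_const card_ord mulnC.
  move=> i _; rewrite sum1_card.
  by case: (ltnP i r) => h; [exact: factor_card (h4 i h) | exact: factor_card (h3 i h)].
have deg v : \sum_(e in I) (v \in e) = 1.
  apply: etrans (hIv v); rewrite -sum1_card [RHS]big_mkcond [LHS]big_mkcond /=.
  by apply: eq_bigr => e _; rewrite !inE; case: (e \in I); case: (v \in e).
have H24 : \sum_(v : vert) \sum_(e in I) (v \in e) = 24.
  by rewrite (eq_bigr (fun _ => 1)) // sum1_card card_ord.
rewrite exchange_big /= in H24.
have H2 : \sum_(e in I) \sum_(v : vert) (v \in e) = \sum_(e in I) 2.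
  apply: eq_bigr => e eI; apply: etrans (hI2 e eI); rewrite -sum1_card [RHS]big_mkcond /=.
  by apply: eq_bigr => v _; case: (v \in e).
rewrite H2 sum_nat_const in H24.
have cardI : #|I| = 12 by lia.
have EK : K24_minus I = [set e : {set vert} | #|e| == 2] :\: I.
  by apply/setP => e; rewrite !inE andbC.
have cardK : #|K24_minus I| = 264.
  rewrite EK cardsDS ?card_draws ?card_ord ?cardI ?bin2 //.
  by apply/subsetP => e eI; rewrite inE hI2.
move: cardU; rewrite hU cardK; lia.
Qed.
Definition Fn1 : seq (seq (seq nat)) :=
  [:: [:: [:: 0; 6; 12; 18]; [:: 1; 7; 13; 19]; [:: 2; 8; 14; 20]; [:: 3; 9; 15; 21]; [:: 4; 10; 16; 22]; [:: 5; 11; 17; 23]];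
  [:: [:: 0; 5; 1]; [:: 2; 22; 21]; [:: 3; 4; 8]; [:: 6; 11; 7]; [:: 9; 14; 10]; [:: 12; 13; 17]; [:: 15; 20; 16]; [:: 18; 23; 19]];
  [:: [:: 0; 20; 19]; [:: 1; 6; 2]; [:: 3; 22; 23]; [:: 4; 9; 5]; [:: 7; 12; 8]; [:: 10; 15; 11]; [:: 13; 14; 18]; [:: 16; 21; 17]];
  [:: [:: 0; 23; 4]; [:: 1; 21; 20]; [:: 2; 7; 3]; [:: 5; 10; 6]; [:: 8; 9; 13]; [:: 11; 16; 12]; [:: 14; 19; 15]; [:: 17; 18; 22]];
  [:: [:: 0; 2; 15]; [:: 1; 11; 4]; [:: 3; 12; 14]; [:: 5; 19; 22]; [:: 6; 21; 8]; [:: 7; 17; 10]; [:: 9; 20; 18]; [:: 13; 23; 16]];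
  [:: [:: 0; 14; 17]; [:: 1; 3; 16]; [:: 2; 5; 12]; [:: 4; 15; 13]; [:: 6; 20; 23]; [:: 7; 22; 9]; [:: 8; 18; 11]; [:: 10; 21; 19]];
  [:: [:: 0; 7; 21]; [:: 1; 18; 15]; [:: 2; 17; 4]; [:: 3; 13; 6]; [:: 5; 16; 14]; [:: 8; 23; 10]; [:: 9; 19; 12]; [:: 11; 20; 22]];
  [:: [:: 0; 11; 9]; [:: 1; 8; 22]; [:: 2; 16; 19]; [:: 3; 18; 5]; [:: 4; 14; 7]; [:: 6; 15; 17]; [:: 10; 20; 13]; [:: 12; 21; 23]];
  [:: [:: 0; 13; 22]; [:: 1; 12; 10]; [:: 2; 23; 9]; [:: 3; 17; 20]; [:: 4; 6; 19]; [:: 5; 15; 8]; [:: 7; 16; 18]; [:: 11; 14; 21]];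
  [:: [:: 0; 10; 3]; [:: 1; 14; 23]; [:: 2; 11; 13]; [:: 4; 21; 18]; [:: 5; 7; 20]; [:: 6; 16; 9]; [:: 8; 17; 19]; [:: 12; 22; 15]];
  [:: [:: 0; 8; 16]; [:: 1; 9; 17]; [:: 2; 10; 18]; [:: 3; 19; 11]; [:: 4; 12; 20]; [:: 5; 13; 21]; [:: 6; 14; 22]; [:: 7; 23; 15]]].

Definition Fn3 : seq (seq (seq nat)) :=
  [:: [:: [:: 0; 11; 12; 23]; [:: 1; 14; 16; 3]; [:: 2; 4; 15; 13]; [:: 5; 6; 17; 18]; [:: 7; 20; 22; 9]; [:: 8; 10; 21; 19]];
  [:: [:: 0; 13; 11; 22]; [:: 1; 12; 10; 23]; [:: 2; 3; 14; 15]; [:: 4; 6; 19; 17]; [:: 5; 7; 18; 16]; [:: 8; 9; 20; 21]];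
  [:: [:: 0; 6; 12; 18]; [:: 1; 7; 13; 19]; [:: 2; 8; 14; 20]; [:: 3; 9; 15; 21]; [:: 4; 10; 16; 22]; [:: 5; 11; 17; 23]];
  [:: [:: 0; 1; 2]; [:: 3; 4; 5]; [:: 6; 7; 8]; [:: 9; 10; 11]; [:: 12; 13; 14]; [:: 15; 16; 17]; [:: 18; 20; 19]; [:: 21; 22; 23]];
  [:: [:: 0; 10; 3]; [:: 1; 5; 20]; [:: 2; 11; 7]; [:: 4; 21; 18]; [:: 6; 16; 9]; [:: 8; 17; 13]; [:: 12; 22; 15]; [:: 14; 19; 23]];
  [:: [:: 0; 20; 15]; [:: 1; 11; 4]; [:: 2; 6; 21]; [:: 3; 12; 8]; [:: 5; 19; 22]; [:: 7; 17; 10]; [:: 9; 14; 18]; [:: 13; 23; 16]];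
  [:: [:: 0; 14; 17]; [:: 1; 21; 16]; [:: 2; 5; 12]; [:: 3; 7; 22]; [:: 4; 9; 13]; [:: 6; 20; 23]; [:: 8; 18; 11]; [:: 10; 15; 19]];
  [:: [:: 0; 7; 21]; [:: 1; 18; 15]; [:: 2; 17; 22]; [:: 3; 13; 6]; [:: 4; 8; 23]; [:: 5; 10; 14]; [:: 9; 19; 12]; [:: 11; 20; 16]];
  [:: [:: 0; 5; 9]; [:: 1; 8; 22]; [:: 2; 16; 19]; [:: 3; 18; 23]; [:: 4; 14; 7]; [:: 6; 15; 11]; [:: 10; 20; 13]; [:: 12; 21; 17]];
  [:: [:: 0; 4; 19]; [:: 1; 6; 10]; [:: 2; 23; 9]; [:: 3; 17; 20]; [:: 5; 15; 8]; [:: 7; 16; 12]; [:: 11; 14; 21]; [:: 13; 22; 18]];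
  [:: [:: 0; 8; 16]; [:: 1; 9; 17]; [:: 2; 10; 18]; [:: 3; 19; 11]; [:: 4; 12; 20]; [:: 5; 13; 21]; [:: 6; 14; 22]; [:: 7; 23; 15]]].

Definition Fn4 : seq (seq (seq nat)) :=
  [:: [:: [:: 0; 2; 17; 3]; [:: 1; 11; 8; 10]; [:: 4; 6; 21; 7]; [:: 5; 15; 12; 14]; [:: 9; 19; 16; 18]; [:: 13; 23; 20; 22]];
  [:: [:: 0; 14; 23; 21]; [:: 1; 3; 18; 4]; [:: 2; 11; 9; 12]; [:: 5; 7; 22; 8]; [:: 6; 15; 13; 16]; [:: 10; 20; 17; 19]];
  [:: [:: 0; 22; 1; 15]; [:: 2; 5; 19; 4]; [:: 3; 13; 10; 12]; [:: 6; 8; 23; 9]; [:: 7; 17; 14; 16]; [:: 11; 20; 18; 21]];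
  [:: [:: 0; 10; 7; 9]; [:: 1; 23; 2; 16]; [:: 3; 6; 20; 5]; [:: 4; 14; 11; 13]; [:: 8; 18; 15; 17]; [:: 12; 22; 19; 21]];
  [:: [:: 0; 5; 1]; [:: 2; 22; 21]; [:: 3; 4; 8]; [:: 6; 11; 7]; [:: 9; 14; 10]; [:: 12; 13; 17]; [:: 15; 20; 16]; [:: 18; 23; 19]];
  [:: [:: 0; 20; 19]; [:: 1; 6; 2]; [:: 3; 22; 23]; [:: 4; 9; 5]; [:: 7; 12; 8]; [:: 10; 15; 11]; [:: 13; 14; 18]; [:: 16; 21; 17]];
  [:: [:: 0; 23; 4]; [:: 1; 21; 20]; [:: 2; 7; 3]; [:: 5; 10; 6]; [:: 8; 9; 13]; [:: 11; 16; 12]; [:: 14; 19; 15]; [:: 17; 18; 22]];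
  [:: [:: 0; 17; 6]; [:: 1; 8; 14]; [:: 2; 20; 13]; [:: 3; 19; 11]; [:: 4; 21; 10]; [:: 5; 12; 18]; [:: 7; 23; 15]; [:: 9; 16; 22]];
  [:: [:: 0; 8; 16]; [:: 1; 18; 7]; [:: 2; 9; 15]; [:: 3; 21; 14]; [:: 4; 12; 20]; [:: 5; 22; 11]; [:: 6; 13; 19]; [:: 10; 17; 23]];
  [:: [:: 0; 11; 18]; [:: 1; 9; 17]; [:: 2; 8; 19]; [:: 3; 10; 16]; [:: 4; 15; 22]; [:: 5; 13; 21]; [:: 6; 12; 23]; [:: 7; 20; 14]];
  [:: [:: 0; 7; 13]; [:: 1; 12; 19]; [:: 2; 10; 18]; [:: 3; 9; 20]; [:: 4; 11; 17]; [:: 5; 16; 23]; [:: 6; 14; 22]; [:: 8; 15; 21]]].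

Definition Fn5 : seq (seq (seq nat)) :=
  [:: [:: [:: 0; 3; 12; 15]; [:: 1; 10; 13; 22]; [:: 2; 5; 14; 17]; [:: 4; 7; 16; 19]; [:: 6; 21; 18; 9]; [:: 8; 11; 20; 23]];
  [:: [:: 0; 9; 12; 21]; [:: 1; 16; 13; 4]; [:: 2; 11; 14; 23]; [:: 3; 6; 15; 18]; [:: 5; 8; 17; 20]; [:: 7; 10; 19; 22]];
  [:: [:: 0; 4; 12; 16]; [:: 1; 9; 13; 21]; [:: 2; 8; 14; 20]; [:: 3; 7; 15; 19]; [:: 5; 11; 17; 23]; [:: 6; 10; 18; 22]];
  [:: [:: 0; 6; 12; 18]; [:: 1; 5; 13; 17]; [:: 2; 10; 14; 22]; [:: 3; 9; 15; 21]; [:: 4; 8; 16; 20]; [:: 7; 23; 19; 11]];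
  [:: [:: 0; 8; 12; 20]; [:: 1; 7; 13; 19]; [:: 2; 6; 14; 18]; [:: 3; 11; 15; 23]; [:: 4; 10; 16; 22]; [:: 5; 9; 17; 21]];
  [:: [:: 0; 11; 1]; [:: 2; 16; 15]; [:: 3; 4; 14]; [:: 5; 19; 18]; [:: 6; 17; 7]; [:: 8; 21; 22]; [:: 9; 20; 10]; [:: 12; 13; 23]];
  [:: [:: 0; 14; 13]; [:: 1; 12; 2]; [:: 3; 16; 17]; [:: 4; 15; 5]; [:: 6; 20; 19]; [:: 7; 18; 8]; [:: 9; 23; 22]; [:: 10; 21; 11]];
  [:: [:: 0; 23; 10]; [:: 1; 15; 14]; [:: 2; 13; 3]; [:: 4; 18; 17]; [:: 5; 16; 6]; [:: 7; 20; 21]; [:: 8; 9; 19]; [:: 11; 22; 12]];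
  [:: [:: 0; 2; 19]; [:: 1; 6; 8]; [:: 3; 22; 5]; [:: 4; 9; 11]; [:: 7; 12; 14]; [:: 10; 15; 17]; [:: 13; 20; 18]; [:: 16; 21; 23]];
  [:: [:: 0; 17; 22]; [:: 1; 3; 20]; [:: 2; 7; 9]; [:: 4; 6; 23]; [:: 5; 10; 12]; [:: 8; 15; 13]; [:: 11; 16; 18]; [:: 14; 19; 21]];
  [:: [:: 0; 5; 7]; [:: 1; 18; 23]; [:: 2; 4; 21]; [:: 3; 10; 8]; [:: 6; 11; 13]; [:: 9; 14; 16]; [:: 12; 19; 17]; [:: 15; 20; 22]]].

Definition Fn7 : seq (seq (seq nat)) :=
  [:: [:: [:: 0; 2; 9; 5]; [:: 1; 4; 13; 16]; [:: 3; 23; 18; 20]; [:: 6; 11; 15; 8]; [:: 7; 10; 19; 22]; [:: 12; 14; 21; 17]];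
  [:: [:: 0; 4; 21; 19]; [:: 1; 6; 10; 3]; [:: 2; 5; 14; 17]; [:: 7; 9; 16; 12]; [:: 8; 11; 20; 23]; [:: 13; 18; 22; 15]];
  [:: [:: 0; 9; 12; 21]; [:: 1; 5; 22; 20]; [:: 2; 4; 11; 7]; [:: 3; 6; 15; 18]; [:: 8; 10; 17; 13]; [:: 14; 16; 23; 19]];
  [:: [:: 0; 17; 15; 20]; [:: 1; 10; 13; 22]; [:: 2; 6; 23; 21]; [:: 3; 5; 12; 8]; [:: 4; 7; 16; 19]; [:: 9; 14; 18; 11]];
  [:: [:: 0; 7; 3; 22]; [:: 1; 18; 16; 21]; [:: 2; 11; 14; 23]; [:: 4; 9; 13; 6]; [:: 5; 8; 17; 20]; [:: 10; 12; 19; 15]];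
  [:: [:: 0; 3; 12; 15]; [:: 1; 8; 4; 23]; [:: 2; 19; 17; 22]; [:: 5; 7; 14; 10]; [:: 6; 21; 18; 9]; [:: 11; 16; 20; 13]];
  [:: [:: 0; 6; 12; 18]; [:: 1; 7; 13; 19]; [:: 2; 8; 14; 20]; [:: 3; 9; 15; 21]; [:: 4; 10; 16; 22]; [:: 5; 11; 17; 23]];
  [:: [:: 0; 11; 1]; [:: 2; 16; 15]; [:: 3; 4; 14]; [:: 5; 19; 18]; [:: 6; 17; 7]; [:: 8; 21; 22]; [:: 9; 20; 10]; [:: 12; 13; 23]];
  [:: [:: 0; 14; 13]; [:: 1; 12; 2]; [:: 3; 16; 17]; [:: 4; 15; 5]; [:: 6; 20; 19]; [:: 7; 18; 8]; [:: 9; 23; 22]; [:: 10; 21; 11]];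
  [:: [:: 0; 23; 10]; [:: 1; 15; 14]; [:: 2; 13; 3]; [:: 4; 18; 17]; [:: 5; 16; 6]; [:: 7; 20; 21]; [:: 8; 9; 19]; [:: 11; 22; 12]];
  [:: [:: 0; 8; 16]; [:: 1; 9; 17]; [:: 2; 10; 18]; [:: 3; 19; 11]; [:: 4; 12; 20]; [:: 5; 13; 21]; [:: 6; 14; 22]; [:: 7; 23; 15]]].

Definition Fn8 : seq (seq (seq nat)) :=
  [:: [:: [:: 0; 2; 22; 3]; [:: 1; 12; 21; 7]; [:: 4; 17; 23; 13]; [:: 5; 15; 9; 20]; [:: 6; 11; 8; 10]; [:: 14; 19; 16; 18]];
  [:: [:: 0; 14; 5; 18]; [:: 1; 3; 23; 4]; [:: 2; 8; 22; 13]; [:: 6; 21; 10; 16]; [:: 7; 12; 9; 11]; [:: 15; 20; 17; 19]];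
  [:: [:: 0; 5; 2; 4]; [:: 1; 15; 6; 19]; [:: 3; 9; 23; 14]; [:: 7; 17; 11; 22]; [:: 8; 12; 10; 13]; [:: 16; 20; 18; 21]];
  [:: [:: 0; 10; 4; 15]; [:: 1; 6; 3; 5]; [:: 2; 20; 7; 16]; [:: 8; 18; 12; 23]; [:: 9; 14; 11; 13]; [:: 17; 21; 19; 22]];
  [:: [:: 0; 13; 19; 9]; [:: 1; 11; 5; 16]; [:: 2; 7; 4; 6]; [:: 3; 21; 8; 17]; [:: 10; 15; 12; 14]; [:: 18; 23; 20; 22]];
  [:: [:: 0; 19; 23; 21]; [:: 1; 14; 20; 10]; [:: 2; 17; 6; 12]; [:: 3; 7; 5; 8]; [:: 4; 18; 9; 22]; [:: 11; 16; 13; 15]];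
  [:: [:: 0; 20; 1; 22]; [:: 2; 11; 21; 15]; [:: 3; 13; 7; 18]; [:: 4; 9; 6; 8]; [:: 5; 19; 10; 23]; [:: 12; 16; 14; 17]];
  [:: [:: 0; 11; 20; 6]; [:: 1; 21; 2; 23]; [:: 3; 16; 22; 12]; [:: 4; 14; 8; 19]; [:: 5; 10; 7; 9]; [:: 13; 17; 15; 18]];
  [:: [:: 0; 8; 1]; [:: 2; 19; 18]; [:: 3; 4; 11]; [:: 5; 22; 21]; [:: 6; 14; 7]; [:: 9; 17; 10]; [:: 12; 13; 20]; [:: 15; 23; 16]];
  [:: [:: 0; 17; 16]; [:: 1; 9; 2]; [:: 3; 19; 20]; [:: 4; 12; 5]; [:: 6; 23; 22]; [:: 7; 15; 8]; [:: 10; 18; 11]; [:: 13; 14; 21]];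
  [:: [:: 0; 23; 7]; [:: 1; 18; 17]; [:: 2; 10; 3]; [:: 4; 21; 20]; [:: 5; 13; 6]; [:: 8; 9; 16]; [:: 11; 19; 12]; [:: 14; 22; 15]]].

Definition Fn9 : seq (seq (seq nat)) :=
  [:: [:: [:: 0; 10; 9; 23]; [:: 1; 2; 13; 14]; [:: 3; 4; 18; 17]; [:: 5; 15; 16; 6]; [:: 7; 20; 19; 8]; [:: 11; 12; 22; 21]];
  [:: [:: 0; 14; 3; 13]; [:: 1; 12; 2; 15]; [:: 4; 5; 16; 17]; [:: 6; 20; 9; 19]; [:: 7; 21; 8; 18]; [:: 10; 11; 22; 23]];
  [:: [:: 0; 6; 12; 18]; [:: 1; 7; 13; 19]; [:: 2; 8; 14; 20]; [:: 3; 9; 15; 21]; [:: 4; 10; 16; 22]; [:: 5; 11; 17; 23]];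
  [:: [:: 0; 2; 9; 5]; [:: 1; 4; 13; 16]; [:: 3; 23; 18; 20]; [:: 6; 11; 15; 8]; [:: 7; 10; 19; 22]; [:: 12; 14; 21; 17]];
  [:: [:: 0; 4; 21; 19]; [:: 1; 6; 10; 3]; [:: 2; 5; 14; 17]; [:: 7; 9; 16; 12]; [:: 8; 11; 20; 23]; [:: 13; 18; 22; 15]];
  [:: [:: 0; 9; 12; 21]; [:: 1; 5; 22; 20]; [:: 2; 4; 11; 7]; [:: 3; 6; 15; 18]; [:: 8; 10; 17; 13]; [:: 14; 16; 23; 19]];
  [:: [:: 0; 17; 15; 20]; [:: 1; 10; 13; 22]; [:: 2; 6; 23; 21]; [:: 3; 5; 12; 8]; [:: 4; 7; 16; 19]; [:: 9; 14; 18; 11]];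
  [:: [:: 0; 7; 3; 22]; [:: 1; 18; 16; 21]; [:: 2; 11; 14; 23]; [:: 4; 9; 13; 6]; [:: 5; 8; 17; 20]; [:: 10; 12; 19; 15]];
  [:: [:: 0; 3; 12; 15]; [:: 1; 8; 4; 23]; [:: 2; 19; 17; 22]; [:: 5; 7; 14; 10]; [:: 6; 21; 18; 9]; [:: 11; 16; 20; 13]];
  [:: [:: 0; 1; 11]; [:: 2; 16; 3]; [:: 4; 15; 14]; [:: 5; 19; 18]; [:: 6; 7; 17]; [:: 8; 9; 22]; [:: 10; 20; 21]; [:: 12; 13; 23]];
  [:: [:: 0; 8; 16]; [:: 1; 9; 17]; [:: 2; 10; 18]; [:: 3; 19; 11]; [:: 4; 12; 20]; [:: 5; 13; 21]; [:: 6; 14; 22]; [:: 7; 23; 15]]].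

Definition Fn10 : seq (seq (seq nat)) :=
  [:: [:: [:: 0; 1; 12; 13]; [:: 2; 3; 14; 15]; [:: 4; 5; 16; 17]; [:: 6; 7; 18; 19]; [:: 8; 9; 20; 21]; [:: 10; 11; 22; 23]];
  [:: [:: 0; 11; 12; 23]; [:: 1; 2; 13; 14]; [:: 3; 4; 15; 16]; [:: 5; 6; 17; 18]; [:: 7; 20; 19; 8]; [:: 9; 10; 21; 22]];
  [:: [:: 0; 2; 20; 3]; [:: 1; 6; 15; 5]; [:: 4; 11; 8; 10]; [:: 7; 22; 17; 21]; [:: 9; 14; 23; 13]; [:: 12; 19; 16; 18]];
  [:: [:: 0; 14; 10; 15]; [:: 1; 3; 21; 4]; [:: 2; 7; 16; 6]; [:: 5; 12; 9; 11]; [:: 8; 23; 18; 22]; [:: 13; 20; 17; 19]];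
  [:: [:: 0; 19; 23; 9]; [:: 1; 15; 11; 16]; [:: 2; 5; 22; 4]; [:: 3; 7; 17; 8]; [:: 6; 12; 10; 13]; [:: 14; 21; 18; 20]];
  [:: [:: 0; 20; 1; 10]; [:: 2; 17; 12; 16]; [:: 3; 6; 23; 5]; [:: 4; 9; 18; 8]; [:: 7; 13; 11; 14]; [:: 15; 21; 19; 22]];
  [:: [:: 0; 7; 4; 6]; [:: 1; 21; 2; 11]; [:: 3; 18; 13; 17]; [:: 5; 10; 19; 9]; [:: 8; 15; 12; 14]; [:: 16; 22; 20; 23]];
  [:: [:: 0; 17; 23; 21]; [:: 1; 8; 5; 7]; [:: 2; 22; 3; 12]; [:: 4; 18; 14; 19]; [:: 6; 11; 20; 10]; [:: 9; 16; 13; 15]];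
  [:: [:: 0; 22; 1; 18]; [:: 2; 8; 6; 9]; [:: 3; 13; 4; 23]; [:: 5; 19; 15; 20]; [:: 7; 12; 21; 11]; [:: 10; 17; 14; 16]];
  [:: [:: 0; 5; 14; 4]; [:: 1; 23; 2; 19]; [:: 3; 10; 7; 9]; [:: 6; 21; 16; 20]; [:: 8; 12; 22; 13]; [:: 11; 17; 15; 18]];
  [:: [:: 0; 8; 16]; [:: 1; 9; 17]; [:: 2; 10; 18]; [:: 3; 19; 11]; [:: 4; 12; 20]; [:: 5; 13; 21]; [:: 6; 14; 22]; [:: 7; 23; 15]]].

Definition Fn11 : seq (seq (seq nat)) :=
  [:: [:: [:: 0; 1; 12; 13]; [:: 2; 3; 14; 15]; [:: 4; 5; 16; 17]; [:: 6; 7; 18; 19]; [:: 8; 9; 20; 21]; [:: 10; 11; 22; 23]];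
  [:: [:: 0; 11; 12; 23]; [:: 1; 2; 13; 14]; [:: 3; 4; 15; 16]; [:: 5; 6; 17; 18]; [:: 7; 20; 19; 8]; [:: 9; 10; 21; 22]];
  [:: [:: 0; 2; 17; 3]; [:: 1; 11; 8; 10]; [:: 4; 6; 21; 7]; [:: 5; 15; 12; 14]; [:: 9; 19; 16; 18]; [:: 13; 23; 20; 22]];
  [:: [:: 0; 14; 23; 21]; [:: 1; 3; 18; 4]; [:: 2; 11; 9; 12]; [:: 5; 7; 22; 8]; [:: 6; 15; 13; 16]; [:: 10; 20; 17; 19]];
  [:: [:: 0; 22; 1; 15]; [:: 2; 5; 19; 4]; [:: 3; 13; 10; 12]; [:: 6; 8; 23; 9]; [:: 7; 17; 14; 16]; [:: 11; 20; 18; 21]];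
  [:: [:: 0; 10; 7; 9]; [:: 1; 23; 2; 16]; [:: 3; 6; 20; 5]; [:: 4; 14; 11; 13]; [:: 8; 18; 15; 17]; [:: 12; 22; 19; 21]];
  [:: [:: 0; 4; 12; 16]; [:: 1; 9; 13; 21]; [:: 2; 8; 14; 20]; [:: 3; 7; 15; 19]; [:: 5; 11; 17; 23]; [:: 6; 10; 18; 22]];
  [:: [:: 0; 6; 12; 18]; [:: 1; 5; 13; 17]; [:: 2; 10; 14; 22]; [:: 3; 9; 15; 21]; [:: 4; 8; 16; 20]; [:: 7; 23; 19; 11]];
  [:: [:: 0; 8; 12; 20]; [:: 1; 7; 13; 19]; [:: 2; 6; 14; 18]; [:: 3; 11; 15; 23]; [:: 4; 10; 16; 22]; [:: 5; 9; 17; 21]];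
  [:: [:: 0; 5; 12; 17]; [:: 1; 8; 13; 20]; [:: 2; 7; 14; 19]; [:: 3; 10; 15; 22]; [:: 4; 9; 16; 21]; [:: 6; 11; 18; 23]];
  [:: [:: 0; 7; 12; 19]; [:: 1; 6; 13; 18]; [:: 2; 9; 14; 21]; [:: 3; 8; 15; 20]; [:: 4; 11; 16; 23]; [:: 5; 10; 17; 22]]].

Definition toF (F : seq (seq (seq nat))) : seq (seq (seq vert)) :=
  map (map (map ordn)) F.

Lemma sol1 : HWP43_24 1 10.
Proof. apply: (@construct _ _ (toF Fn1)); vm_compute; reflexivity. Qed.

Lemma sol3 : HWP43_24 3 8.
Proof. apply: (@construct _ _ (toF Fn3)); vm_compute; reflexivity. Qed.

Lemma sol4 : HWP43_24 4 7.
Proof. apply: (@construct _ _ (toF Fn4)); vm_compute; reflexivity. Qed.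

Lemma sol5 : HWP43_24 5 6.
Proof. apply: (@construct _ _ (toF Fn5)); vm_compute; reflexivity. Qed.

Lemma sol7 : HWP43_24 7 4.
Proof. apply: (@construct _ _ (toF Fn7)); vm_compute; reflexivity. Qed.

Lemma sol8 : HWP43_24 8 3.
Proof. apply: (@construct _ _ (toF Fn8)); vm_compute; reflexivity. Qed.

Lemma sol9 : HWP43_24 9 2.
Proof. apply: (@construct _ _ (toF Fn9)); vm_compute; reflexivity. Qed.

Lemma sol10 : HWP43_24 10 1.
Proof. apply: (@construct _ _ (toF Fn10)); vm_compute; reflexivity. Qed.

Lemma sol11 : HWP43_24 11 0.
Proof. apply: (@construct _ _ (toF Fn11)); vm_compute; reflexivity. Qed.

Theorem mainTheorem8 (r s : nat) :
  0 < r -> r <> 2 -> r <> 6 -> (HWP43_24 r s <-> r + s = 11).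
Proof.
move=> r0 r2 r6; split; first exact: necessity.
move=> hrs; have -> : s = 11 - r by lia.
have hr : r <= 11 by lia.
clear hrs; move: r0 r2 r6.
case: r hr => [|[|[|[|[|[|[|[|[|[|[|[|r]]]]]]]]]]]] hr r0 r2 r6 /=.
- by [].
- exact: sol1.
- by case: (r2 erefl).
- exact: sol3.
- exact: sol4.
- exact: sol5.
- by case: (r6 erefl).
- exact: sol7.
- exact: sol8.
- exact: sol9.
- exact: sol10.
- exact: sol11.
- by [].
Qed.
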